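(* Let $R$ be a principal ideal domain and let $Ra$ be a left ideal of $R$ that is not a two-sided ideal. Then $Ra$ is weakly prime if and only if $a$ has no non-unit invariant factor. Equivalently, $Ra$ is weakly prime if and only if $Ra$ is not contained in any proper two-sided ideal of $R$.
   Context: A principal ideal domain (PID) is a (not necessarily commutative) domain in which every left ideal and every right ideal is principal. A left ideal $\mathfrak{p}$ is weakly prime if $\mathfrak{p}\neq R$ and, for left ideals $A,B$, $AB\subseteq\mathfrak{p}$ and $\mathfrak{p}B\subseteq\mathfrak{p}$ imply $A\subseteq\mathfrak{p}$ or $B\subseteq\mathfrak{p}$. A nonzero $c$ is invariant if $Rc=cR$. $c$ is a factor of $a$ if $a=rcs$ for some $r,s\in R$. *)

(* Defs.v *)
From HB Require Import structures.
From mathcomp Require Import all_boot all_order all_algebra.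
Set Implicit Arguments. Unset Strict Implicit. Unset Printing Implicit Defensive.
Import GRing.Theory.
Local Open Scope ring_scope.

Section Defs.
Variable R : unitRingType.

Definition subset_of (A B : R -> Prop) : Prop := forall x, A x -> B x.

Definition is_left_ideal (I : R -> Prop) : Prop :=
  I 0 /\ (forall x y, I x -> I y -> I (x + y)) /\ (forall r x, I x -> I (r * x)).

Definition is_right_ideal (I : R -> Prop) : Prop :=
  I 0 /\ (forall x y, I x -> I y -> I (x + y)) /\ (forall r x, I x -> I (x * r)).

Definition is_two_sided_ideal (I : R -> Prop) : Prop :=
  is_left_ideal I /\ is_right_ideal I.

Definition lprinc (a : R) : R -> Prop := fun x => exists r, x = r * a.
Definition rprinc (a : R) : R -> Prop := fun x => exists r, x = a * r.

Definition is_domain : Prop := forall x y : R, x * y = 0 -> x = 0 \/ y = 0.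

Definition is_PID : Prop :=
  is_domain /\
  (forall I, is_left_ideal I -> exists a, forall x, I x <-> lprinc a x) /\
  (forall I, is_right_ideal I -> exists a, forall x, I x <-> rprinc a x).

Definition prod_ideal (A B : R -> Prop) : R -> Prop :=
  fun x => exists s : seq (R * R),
    (forall p, p \in s -> A p.1 /\ B p.2) /\ x = \sum_(p <- s) (p.1 * p.2).

Definition proper_set (I : R -> Prop) : Prop := exists x, ~ I x.

Definition weakly_prime (P : R -> Prop) : Prop :=
  is_left_ideal P /\ proper_set P /\
  forall A B, is_left_ideal A -> is_left_ideal B ->
    subset_of (prod_ideal A B) P -> subset_of (prod_ideal P B) P ->
    subset_of A P \/ subset_of B P.

Definition invariant_elt (c : R) : Prop :=
  c <> 0 /\ forall x, lprinc c x <-> rprinc c x.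

Definition factor_of (c a : R) : Prop := exists r s, a = r * c * s.

End Defs.

(* Main.v *)
Require Import Defs.
From mathcomp Require Import all_boot all_order all_algebra.
From Stdlib Require Import Classical.
Import GRing.Theory.
Local Open Scope ring_scope.

Section Aux.
Variable R : unitRingType.
Implicit Types a b c x y : R.

Lemma lprinc_left (a : R) : is_left_ideal (lprinc a).
Proof.
split; first by exists 0; rewrite mul0r.
split; first by move=> x y [r ->] [s ->]; exists (r + s); rewrite mulrDl.
by move=> r x [s ->]; exists (r * s); rewrite mulrA.
Qed.

Lemma left_sum (P : R -> Prop) (s : seq (R * R)) (F : R * R -> R) :
  is_left_ideal P -> (forall p, p \in s -> P (F p)) -> P (\sum_(p <- s) F p).
Proof.
move=> [P0 [PD _]]; elim: s => [|q s IH] H; first by rewrite big_nil.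
rewrite big_cons; apply: PD; first by apply: H; rewrite inE eqxx.
by apply: IH => p ps; apply: H; rewrite inE ps orbT.
Qed.

Lemma unit_lr (c y z : R) : y * c = 1 -> c * z = 1 -> c \is a GRing.unit.
Proof.
move=> h1 h2; apply/GRing.unitrP; exists y; split => //.
have -> : y = z by rewrite -[y]mulr1 -h2 mulrA h1 mul1r.
done.
Qed.

Lemma cancel_r (x y c : R) : is_domain R -> c <> 0 -> x * c = y * c -> x = y.
Proof.
move=> hd hc e; have : (x - y) * c = 0 by rewrite mulrBl e subrr.
by case/hd => // /eqP; rewrite subr_eq0 => /eqP.
Qed.

Lemma cancel_l (x y c : R) : is_domain R -> c <> 0 -> c * x = c * y -> x = y.
Proof.
move=> hd hc e; have : c * (x - y) = 0 by rewrite mulrBr e subrr.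
by case/hd => // /eqP; rewrite subr_eq0 => /eqP.
Qed.

Lemma a_neq0 (a : R) : ~ is_two_sided_ideal (lprinc a) -> a <> 0.
Proof.
move=> nt a0; apply: nt; split; first exact: lprinc_left.
split; first by exists 0; rewrite mul0r.
split; first by move=> x y [r ->] [s ->]; exists (r + s); rewrite mulrDl.
by move=> r x [s ->]; exists 0; rewrite a0 !mulr0 mul0r.
Qed.

Lemma inv_two_sided (c : R) : invariant_elt c -> is_two_sided_ideal (lprinc c).
Proof.
move=> [_ hc]; split; first exact: lprinc_left.
split; first by exists 0; rewrite mul0r.
split; first by move=> x y [r ->] [s ->]; exists (r + s); rewrite mulrDl.
move=> r x [t ->]; have [u hu] : lprinc c (c * r) by apply/hc; exists r.
by exists (t * u); rewrite -mulrA hu mulrA.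
Qed.

Lemma inv_nonunit_proper (c : R) : invariant_elt c -> ~ (c \is a GRing.unit) ->
  ~ lprinc c 1.
Proof.
move=> [_ hc] nu h1; apply: nu; case: (h1) => u hu.
have [v hv] : rprinc c 1 by apply/hc.
by apply: (@unit_lr c u v).
Qed.

Lemma F_C (a : R) :
  (exists c : R, invariant_elt c /\ ~ (c \is a GRing.unit) /\ factor_of c a) ->
  (exists I : R -> Prop, is_two_sided_ideal I /\ proper_set I /\
          subset_of (lprinc a) I).
Proof.
move=> [c [hi [nu [r [s ha]]]]]; exists (lprinc c); split; first exact: inv_two_sided.
split; first by exists 1; apply: inv_nonunit_proper.
have [t ht] : lprinc c (c * s) by apply/hi.2; exists s.
by move=> x [r' ->]; exists (r' * r * t); rewrite ha -!mulrA ht.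
Qed.

Lemma C_F (a : R) : is_PID R -> ~ is_two_sided_ideal (lprinc a) ->
  (exists I : R -> Prop, is_two_sided_ideal I /\ proper_set I /\
          subset_of (lprinc a) I) ->
  (exists c : R, invariant_elt c /\ ~ (c \is a GRing.unit) /\ factor_of c a).
Proof.
move=> [hd [hl hr]] nt [I [[hIl hIr] [[x0 hx0] hsub]]].
have a0 := @a_neq0 a nt.
have [c hc] := hl I hIl.
have [d hdd] := hr I hIr.
have Ia : I a by apply: hsub; exists 1; rewrite mul1r.
have Ic : I c by apply/hc; exists 1; rewrite mul1r.
have Id : I d by apply/hdd; exists 1; rewrite mulr1.
have c0 : c <> 0.
  move=> c0; apply: a0; have [r] := (hc a).1 Ia; by rewrite c0 mulr0.
have [u hu] := (hdd c).1 Ic.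
have [v hv] := (hc d).1 Id.
have [w hw] := (hc (c * u)).1 (hIr.2.2 u c Ic).
have vw : v * w = 1.
  symmetry; apply: (@cancel_r _ _ c hd c0).
  by rewrite mul1r -mulrA -hw mulrA -hv -hu.
have w0 : w <> 0 by move=> w0; move: vw; rewrite w0 mulr0 => /eqP; rewrite eq_sym oner_eq0.
have wv : w * v = 1.
  apply: (@cancel_r _ _ w hd w0). by rewrite -mulrA vw mulr1 mul1r.
have dwc : c = w * d by rewrite hv mulrA wv mul1r.
exists d; split; [split|split].
- by move=> d0; apply: c0; rewrite dwc d0 mulr0.
- move=> x; split.
  + move=> [r ->]; apply/hdd; apply: hIl.2.2 Id.
  + move/hdd => /hc [r ->]; exists (r * w); by rewrite -mulrA -dwc.
- move=> ud; have [y [_ hy]] := GRing.unitrP _ ud; apply: hx0.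
  by rewrite -[x0]mul1r -hy -mulrA; apply: (hIr.2.2 _ _ Id).
- have [r hra] := (hc a).1 Ia; exists (r * w), 1.
  by rewrite mulr1 -mulrA -dwc.
Qed.

Lemma F_notW (a : R) : is_PID R -> ~ is_two_sided_ideal (lprinc a) ->
  (exists c : R, invariant_elt c /\ ~ (c \is a GRing.unit) /\ factor_of c a) ->
  ~ weakly_prime (lprinc a).
Proof.
move=> [hd _] nt [c [hi [nu [r [s ha]]]]] [_ [_ W]].
have a0 := @a_neq0 a nt.
have [t ht] : lprinc c (c * s) by apply/hi.2; exists s.
set b := r * t.
have hab : a = b * c by rewrite ha -mulrA ht mulrA.
have [b' hab'] : rprinc c a by apply/hi.2; exists b.
have LP := lprinc_left a.
have LB : is_left_ideal (fun x => lprinc a (c * x)).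
  split; first by rewrite mulr0; exact: LP.1.
  split; first by move=> x y hx hy; rewrite mulrDr; apply: LP.2.1.
  move=> r0 x hx; have [u hu] : lprinc c (c * r0) by apply/hi.2; exists r0.
  by rewrite mulrA hu -mulrA; apply: LP.2.2.
have := W (lprinc c) (fun x => lprinc a (c * x)) (lprinc_left c) LB.
case.
- move=> x [q [hq ->]]; apply: left_sum => // p /hq [[u hu] hp2].
  by rewrite hu -mulrA; apply: LP.2.2.
- move=> x [q [hq ->]]; apply: left_sum => // p /hq [[u hu] hp2].
  have -> : p.1 * p.2 = (u * b) * (c * p.2) by rewrite hu hab !mulrA.
  by apply: LP.2.2.
- move=> sub; apply: nt; split; first exact: LP.
  split; first exact: LP.1. split; first exact: LP.2.1.
  have [u hu] := sub c (ex_intro _ 1 (esym (mul1r c))).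
  move=> y x [q ->]; have [v hv] : lprinc c (c * y) by apply/hi.2; exists y.
  have e : a * y = b * v * u * a by rewrite {1}hab -mulrA hv {1}hu !mulrA.
  by exists (q * b * v * u); rewrite -mulrA e !mulrA.
- move=> sub; have [u hu] := sub b' (ex_intro _ 1 (esym (etrans (mul1r a) hab'))).
  have cu : c * u = 1.
    apply: (@cancel_r _ _ a hd a0); by rewrite mul1r -mulrA -hu -hab'.
  apply: nu; have [v hv] : lprinc c 1 by apply/hi.2; exists u.
  by apply: (@unit_lr c v u).
Qed.

Lemma notC_W (a : R) : ~ is_two_sided_ideal (lprinc a) ->
  ~ (exists I : R -> Prop, is_two_sided_ideal I /\ proper_set I /\
          subset_of (lprinc a) I) ->
  weakly_prime (lprinc a).
Proof.
move=> nt nC; have LP := lprinc_left a.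
split; first exact: LP.
split.
  exists 1 => -[t ht]; apply: nt; split => //.
  split; first exact: LP.1. split; first exact: LP.2.1.
  by move=> r x _; exists (x * r * t); rewrite -mulrA -ht mulr1.
move=> A B hA hB _ hPB; right.
set M := fun y => forall r z, B z -> lprinc a (y * r * z).
have M1 : M 1.
  apply: NNPP => nM; apply: nC; exists M; split; last split.
  - split; split.
    + by move=> r z _; rewrite !mul0r; exact: LP.1.
    + split; first by move=> x y hx hy r z hz; rewrite !mulrDl; apply: LP.2.1; auto.
      by move=> r x hx s z hz; rewrite -!mulrA; apply: LP.2.2; rewrite !mulrA; auto.
    + by move=> r z _; rewrite !mul0r; exact: LP.1.
    + split; first by move=> x y hx hy r z hz; rewrite !mulrDl; apply: LP.2.1; auto.
      by move=> r x hx s z hz; rewrite -(mulrA x); auto.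
  - by exists 1.
  - move=> p hp r z hz; apply: hPB; exists [:: (p, r * z)]; split.
      by move=> q; rewrite inE => /eqP -> /=; split => //; apply: hB.2.2.
    by rewrite big_seq1 /= mulrA.
move=> z hz; have := M1 1 z hz; by rewrite !mul1r.
Qed.

End Aux.

Theorem proposition3p17 (R : unitRingType) (a : R) :
  is_PID R ->
  ~ is_two_sided_ideal (lprinc a) ->
  (weakly_prime (lprinc a) <->
     ~ (exists c : R, invariant_elt c /\ ~ (c \is a GRing.unit) /\ factor_of c a)) /\
  (weakly_prime (lprinc a) <->
     ~ (exists I : R -> Prop, is_two_sided_ideal I /\ proper_set I /\
          subset_of (lprinc a) I)).
Proof.
move=> hP nt; split; split.
- by move=> W F; exact: (@F_notW R a hP nt F W).
- by move=> nF; apply: notC_W => // C; apply: nF; apply: C_F.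
- by move=> W C; exact: (@F_notW R a hP nt (@C_F R a hP nt C) W).
- exact: notC_W.
Qed.
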